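(* Let $R$ be a semiring, $i:M\to N$ a normal monomorphism of $R$-modules (identify $M$ with the saturated submodule $i(M)$ of $N$), and $L$ a saturated submodule of $M$. Then $L$ is a saturated submodule of $N$; the projections $\pi:M\to M/L$ and $\pi':N\to N/L$ are normal epimorphisms; the induced map $i':M/L\to N/L$, $[m]\mapsto[i(m)]$, is a well-defined normal monomorphism; and the commutative square with top $i$, left $\pi$, right $\pi'$, bottom $i'$ is both a pullback and a pushout in $\mathrm{Mod}_R$.
   Context: Semirings are commutative with $0,1$; an $R$-module is a commutative monoid with $R$-action. A submodule $N$ of $M$ is saturated if $x+y\in N$ and $y\in N$ imply $x\in N$. For a submodule $K\subseteq M$, $M/K$ is the set of classes of the congruence $x\sim y\iff x+k=y+k'$ for some $k,k'\in K$. A morphism is a normal monomorphism (resp. normal epimorphism) if it is the equalizer (resp. coequalizer) of some morphism and the zero map. *)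

(* Defs.v *)
From HB Require Import structures.
From mathcomp Require Import all_boot all_order all_algebra.
From Stdlib Require Import ClassicalEpsilon FunctionalExtensionality
  PropExtensionality ProofIrrelevance.
From mathcomp Require Import boolp.

Set Implicit Arguments.
Unset Strict Implicit.
Unset Printing Implicit Defensive.
Import GRing.Theory.
Local Open Scope ring_scope.

Section Submodules.
Variable R : comPzSemiRingType.
Variable M : lSemiModType R.

Record submod := Submod {
  sm_set :> M -> Prop;
  sm0 : sm_set 0;
  smD : forall x y, sm_set x -> sm_set y -> sm_set (x + y);
  smZ : forall (r : R) x, sm_set x -> sm_set (r *: x) }.

Definition saturated (N : M -> Prop) : Prop :=
  forall x y, N (x + y) -> N y -> N x.

Definition saturated_submodule (N : M -> Prop) : Prop :=
  [/\ N 0, (forall x y, N x -> N y -> N (x + y)),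
      (forall (r : R) x, N x -> N (r *: x)) & saturated N].

Variable K : submod.

Definition kcongr (x y : M) : Prop :=
  exists k k', [/\ K k, K k' & x + k = y + k'].

Lemma kcongr_refl x : kcongr x x.
Proof. by exists 0, 0; split => //; apply: sm0. Qed.

Lemma kcongr_sym x y : kcongr x y -> kcongr y x.
Proof. by move=> [k [k' [? ? e]]]; exists k', k; split. Qed.

Lemma kcongr_trans x y z : kcongr x y -> kcongr y z -> kcongr x z.
Proof.
move=> [k1 [k1' [K1 K1' e1]]] [k2 [k2' [K2 K2' e2]]].
exists (k1 + k2), (k2' + k1'); split; try by apply: smD.
by rewrite addrA e1 -addrA [k1' + _]addrC addrA e2 -addrA.
Qed.

Lemma kcongrD x x' y y' : kcongr x x' -> kcongr y y' -> kcongr (x + y) (x' + y').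
Proof.
move=> [k1 [k1' [K1 K1' e1]]] [k2 [k2' [K2 K2' e2]]].
exists (k1 + k2), (k1' + k2'); split; try by apply: smD.
rewrite addrACA e1 e2; by rewrite addrACA.
Qed.

Lemma kcongrZ (r : R) x y : kcongr x y -> kcongr (r *: x) (r *: y).
Proof.
move=> [k [k' [Kk Kk' e]]]; exists (r *: k), (r *: k'); split; try by apply: smZ.
by rewrite -!scalerDr e.
Qed.

Definition kclass (x : M) : M -> Prop := kcongr x.

Definition quot := {A : M -> Prop | exists x, A = kclass x}.

HB.instance Definition _ := gen_eqMixin quot.
HB.instance Definition _ := gen_choiceMixin quot.

Definition qproj (x : M) : quot := exist _ (kclass x) (ex_intro _ x erefl).

Lemma qproj_eq x y : qproj x = qproj y <-> kcongr x y.
Proof.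
split.
- move=> /(f_equal (@proj1_sig _ _)) /= e.
  have : kclass y y by apply: kcongr_refl.
  by rewrite -e.
- move=> h; apply: eq_sig_hprop => /=; first by move=> ? ? ?; apply: proof_irrelevance.
  apply: functional_extensionality => z; apply: propositional_extensionality.
  split => hz; first by apply: kcongr_trans (kcongr_sym h) hz.
  exact: kcongr_trans h hz.
Qed.

Definition qrep (q : quot) : M :=
  proj1_sig (cid (proj2_sig q)).

Lemma qrepK q : qproj (qrep q) = q.
Proof.
rewrite /qrep; case: cid => x e.
case: q e => A hA /= e; apply: eq_sig_hprop => /=;
  last by rewrite e.
by move=> ? ? ?; apply: proof_irrelevance.
Qed.

Lemma qproj_rep x : kcongr (qrep (qproj x)) x.
Proof. by apply/qproj_eq; rewrite qrepK. Qed.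

Lemma quot_ind (P : quot -> Prop) : (forall x, P (qproj x)) -> forall q, P q.
Proof. by move=> h q; rewrite -(qrepK q). Qed.

Definition qzero : quot := qproj 0.
Definition qadd (a b : quot) : quot := qproj (qrep a + qrep b).
Definition qscale (r : R) (a : quot) : quot := qproj (r *: qrep a).

Lemma qaddE x y : qadd (qproj x) (qproj y) = qproj (x + y).
Proof. by apply/qproj_eq; apply: kcongrD; apply: qproj_rep. Qed.

Lemma qscaleE r x : qscale r (qproj x) = qproj (r *: x).
Proof. by apply/qproj_eq; apply: kcongrZ; apply: qproj_rep. Qed.

Lemma qaddA : associative qadd.
Proof.
elim/quot_ind => x; elim/quot_ind => y; elim/quot_ind => z.
by rewrite !qaddE addrA.
Qed.

Lemma qaddC : commutative qadd.
Proof. by elim/quot_ind => x; elim/quot_ind => y; rewrite !qaddE addrC. Qed.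

Lemma qadd0 : left_id qzero qadd.
Proof. by elim/quot_ind => x; rewrite /qzero qaddE add0r. Qed.

HB.instance Definition _ := GRing.isNmodule.Build quot qaddA qaddC qadd0.

Lemma qaddE' x y : qproj x + qproj y = qproj (x + y).
Proof. exact: qaddE. Qed.

Lemma qscaleA a b v : qscale a (qscale b v) = qscale (a * b) v.
Proof. by elim/quot_ind: v => x; rewrite !qscaleE scalerA. Qed.

Lemma qscale0 v : qscale 0 v = 0.
Proof. by elim/quot_ind: v => x; rewrite qscaleE scale0r. Qed.

Lemma qscale1 : left_id 1 qscale.
Proof. by elim/quot_ind => x; rewrite qscaleE scale1r. Qed.

Lemma qscaleDr : right_distributive qscale +%R.
Proof.
move=> r; elim/quot_ind => x; elim/quot_ind => y.
by rewrite qaddE' !qscaleE qaddE' scalerDr.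
Qed.

Lemma qscaleDl v : {morph qscale^~ v : a b / a + b}.
Proof.
elim/quot_ind: v => x a b.
by rewrite !qscaleE qaddE' scalerDl.
Qed.

HB.instance Definition _ := GRing.Nmodule_isLSemiModule.Build R quot
  qscaleA qscale0 qscale1 qscaleDr qscaleDl.

Lemma qproj_semilinear : semilinear_for *:%R qproj.
Proof.
split; first by move=> r x; rewrite -qscaleE.
by move=> x y; rewrite -qaddE'.
Qed.

HB.instance Definition _ :=
  GRing.isSemilinear.Build R M quot *:%R qproj qproj_semilinear.

End Submodules.

Arguments quot {R M} K.
Arguments qproj {R M} K.

Section Image.
Variables (R : comPzSemiRingType) (M N : lSemiModType R) (f : {linear M -> N}).
Variable L : submod M.

Definition image_set (y : N) : Prop := exists2 x, L x & y = f x.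

Lemma image0 : image_set 0.
Proof. by exists 0; [apply: sm0 | rewrite linear0]. Qed.

Lemma imageD x y : image_set x -> image_set y -> image_set (x + y).
Proof.
by move=> [a La ->] [b Lb ->]; exists (a + b); [apply: smD | rewrite linearD].
Qed.

Lemma imageZ (r : R) x : image_set x -> image_set (r *: x).
Proof. by move=> [a La ->]; exists (r *: a); [apply: smZ | rewrite linearZ]. Qed.

Definition image_submod : submod N := Submod image0 imageD imageZ.
End Image.

Section Category.
Variable R : comPzSemiRingType.

Definition is_equalizer_with_zero (A B C : lSemiModType R)
  (f : {linear A -> B}) (g : {linear B -> C}) : Prop :=
  (forall a, g (f a) = 0) /\
  (forall (D : lSemiModType R) (h : {linear D -> B}),
     (forall d, g (h d) = 0) ->
     (exists u : {linear D -> A}, forall d, f (u d) = h d) /\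
     (forall u v : {linear D -> A},
        (forall d, f (u d) = h d) -> (forall d, f (v d) = h d) -> u =1 v)).

Definition is_coequalizer_with_zero (A B C : lSemiModType R)
  (g : {linear A -> B}) (f : {linear B -> C}) : Prop :=
  (forall a, f (g a) = 0) /\
  (forall (D : lSemiModType R) (h : {linear B -> D}),
     (forall a, h (g a) = 0) ->
     (exists u : {linear C -> D}, forall b, u (f b) = h b) /\
     (forall u v : {linear C -> D},
        (forall b, u (f b) = h b) -> (forall b, v (f b) = h b) -> u =1 v)).

Definition normal_mono (A B : lSemiModType R) (f : {linear A -> B}) : Prop :=
  exists (C : lSemiModType R) (g : {linear B -> C}), is_equalizer_with_zero f g.

Definition normal_epi (B C : lSemiModType R) (f : {linear B -> C}) : Prop :=
  exists (A : lSemiModType R) (g : {linear A -> B}), is_coequalizer_with_zero g f.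

(** Commutative square   P --p1--> X
                          |         |
                          p2        f
                          v         v
                          Y ---g--> Z        *)
Definition is_pullback (P X Y Z : lSemiModType R)
  (p1 : {linear P -> X}) (p2 : {linear P -> Y})
  (f : {linear X -> Z}) (g : {linear Y -> Z}) : Prop :=
  (forall x, f (p1 x) = g (p2 x)) /\
  (forall (D : lSemiModType R) (a : {linear D -> X}) (b : {linear D -> Y}),
     (forall d, f (a d) = g (b d)) ->
     (exists u : {linear D -> P}, forall d, p1 (u d) = a d /\ p2 (u d) = b d) /\
     (forall u v : {linear D -> P},
        (forall d, p1 (u d) = a d /\ p2 (u d) = b d) ->
        (forall d, p1 (v d) = a d /\ p2 (v d) = b d) -> u =1 v)).

Definition is_pushout (P X Y Z : lSemiModType R)
  (p1 : {linear P -> X}) (p2 : {linear P -> Y})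
  (f : {linear X -> Z}) (g : {linear Y -> Z}) : Prop :=
  (forall x, f (p1 x) = g (p2 x)) /\
  (forall (D : lSemiModType R) (a : {linear X -> D}) (b : {linear Y -> D}),
     (forall x, a (p1 x) = b (p2 x)) ->
     (exists u : {linear Z -> D}, forall x y, u (f x) = a x /\ u (g y) = b y) /\
     (forall u v : {linear Z -> D},
        (forall x y, u (f x) = a x /\ u (g y) = b y) ->
        (forall x y, v (f x) = a x /\ v (g y) = b y) -> u =1 v)).
End Category.

(* Main.v *)
Require Import Defs.
From HB Require Import structures.
From mathcomp Require Import all_boot all_order all_algebra.
From Stdlib Require Import ClassicalEpsilon FunctionalExtensionality
  PropExtensionality ProofIrrelevance.
From mathcomp Require Import boolp.
Set Implicit Arguments.
Unset Strict Implicit.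
Unset Printing Implicit Defensive.
Import GRing.Theory.
Local Open Scope ring_scope.

Section Helpers.
Variable R : comPzSemiRingType.

Definition mklin (A B : lSemiModType R) (f : A -> B)
  (H : GRing.semilinear_for *:%R f) : {linear A -> B} :=
  HB.pack f (GRing.isSemilinear.Build R A B *:%R f H).

Lemma mklinE (A B : lSemiModType R) (f : A -> B) H x : @mklin A B f H x = f x.
Proof. by []. Qed.

Lemma line_semilin (N : lSemiModType R) (x : N) :
  GRing.semilinear_for *:%R (fun r : R^o => r *: x).
Proof.
split.
- by move=> a r /=; rewrite scalerA.
- by move=> a b /=; rewrite scalerDl.
Qed.

Definition line (N : lSemiModType R) (x : N) : {linear R^o -> N} :=
  mklin (line_semilin x).

Lemma nm_inj (A B : lSemiModType R) (f : {linear A -> B}) :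
  normal_mono f -> injective f.
Proof.
move=> [C [g [g0 H]]] a b e.
have hz : forall d : R^o, g (line (f a) d) = 0.
  by move=> d; rewrite /= linearZ /= g0 scaler0.
have [_ U] := H _ (line (f a)) hz.
have := U (line a) (line b); rewrite /= => /(_ _ _ 1).
rewrite !scale1r; apply.
- by move=> d; rewrite /= linearZ.
- by move=> d; rewrite /= linearZ e.
Qed.

Lemma nm_im (A B : lSemiModType R) (f : {linear A -> B}) :
  normal_mono f -> exists (C : lSemiModType R) (g : {linear B -> C}),
   (forall a, g (f a) = 0) /\ forall b, g b = 0 -> exists a, f a = b.
Proof.
move=> [C [g [g0 H]]]; exists C, g; split => // b gb.
have hz : forall d : R^o, g (line b d) = 0.
  by move=> d; rewrite /= linearZ /= gb scaler0.
have [[u hu] _] := H _ (line b) hz.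
by exists (u 1); rewrite hu /= scale1r.
Qed.
End Helpers.

Section Lift.
Variables (R : comPzSemiRingType) (M D : lSemiModType R) (K : submod M).
Variable h : {linear M -> D}.
Hypothesis hK : forall k, K k -> h k = 0.

Lemma h_congr x y : kcongr K x y -> h x = h y.
Proof.
move=> [k [k' [Kk Kk' e]]].
have := f_equal h e; rewrite !linearD (hK Kk) (hK Kk').
by rewrite !addr0.
Qed.

Definition qlift_fun (q : quot K) : D := h (qrep q).

Lemma qlift_funE x : qlift_fun (qproj K x) = h x.
Proof. exact/h_congr/qproj_rep. Qed.

Lemma qlift_semilin : GRing.semilinear_for *:%R qlift_fun.
Proof.
split.
- move=> r; elim/quot_ind => x.
  by rewrite -linearZ /= qlift_funE qlift_funE linearZ.
- elim/quot_ind => x; elim/quot_ind => y.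
  by rewrite -linearD /= qlift_funE qlift_funE qlift_funE linearD.
Qed.

Definition qlift : {linear quot K -> D} := mklin qlift_semilin.

Lemma qliftE x : qlift (qproj K x) = h x.
Proof. exact: qlift_funE. Qed.
End Lift.

Lemma qproj_uniq (R : comPzSemiRingType) (M D : lSemiModType R) (K : submod M)
  (u v : quot K -> D) : (forall x, u (qproj K x) = v (qproj K x)) -> u =1 v.
Proof. by move=> h; elim/quot_ind. Qed.

Lemma qprojK0 (R : comPzSemiRingType) (M : lSemiModType R) (K : submod M) k :
  K k -> qproj K k = 0.
Proof.
move=> Kk; rewrite -(linear0 (qproj K)); apply/qproj_eq.
exists 0, k; split => //; [exact: sm0 | by rewrite addr0 add0r].
Qed.

Section Subm.
Variables (R : comPzSemiRingType) (M : lSemiModType R) (K : submod M).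
Definition subm := {x : M | K x}.
HB.instance Definition _ := gen_eqMixin subm.
HB.instance Definition _ := gen_choiceMixin subm.

Lemma subm_eq (a b : subm) : proj1_sig a = proj1_sig b -> a = b.
Proof. by move=> e; apply: eq_sig_hprop => // ? ? ?; apply: proof_irrelevance. Qed.

Definition szero : subm := exist _ 0 (sm0 K).
Definition sadd (a b : subm) : subm :=
  exist _ (proj1_sig a + proj1_sig b) (smD (proj2_sig a) (proj2_sig b)).
Definition sscale (r : R) (a : subm) : subm :=
  exist _ (r *: proj1_sig a) (smZ r (proj2_sig a)).

Lemma saddA : associative sadd.
Proof. by move=> a b c; apply: subm_eq; rewrite /= addrA. Qed.
Lemma saddC : commutative sadd.
Proof. by move=> a b; apply: subm_eq; rewrite /= addrC. Qed.
Lemma sadd0 : left_id szero sadd.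
Proof. by move=> a; apply: subm_eq; rewrite /= add0r. Qed.
HB.instance Definition _ := GRing.isNmodule.Build subm saddA saddC sadd0.

Lemma sscaleA a b v : sscale a (sscale b v) = sscale (a * b) v.
Proof. by apply: subm_eq; rewrite /= scalerA. Qed.
Lemma sscale0 v : sscale 0 v = 0.
Proof. by apply: subm_eq; rewrite /= scale0r. Qed.
Lemma sscale1 : left_id 1 sscale.
Proof. by move=> v; apply: subm_eq; rewrite /= scale1r. Qed.
Lemma sscaleDr : right_distributive sscale +%R.
Proof. by move=> r a b; apply: subm_eq; rewrite /= scalerDr. Qed.
Lemma sscaleDl v : {morph sscale^~ v : a b / a + b}.
Proof. by move=> a b; apply: subm_eq; rewrite /= scalerDl. Qed.
HB.instance Definition _ := GRing.Nmodule_isLSemiModule.Build R subm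
  sscaleA sscale0 sscale1 sscaleDr sscaleDl.

Lemma sincl_semilin : GRing.semilinear_for *:%R (fun a : subm => proj1_sig a).
Proof. by split. Qed.
Definition sincl : {linear subm -> M} := mklin sincl_semilin.

Lemma qproj_nepi : normal_epi (qproj K).
Proof.
exists subm, sincl; split.
- by move=> [a Ka] /=; exact: qprojK0.
- move=> D h hz; split.
  + have hK : forall k, K k -> h k = 0 by move=> k Kk; exact: (hz (exist _ k Kk)).
    by exists (qlift hK) => b; rewrite qliftE.
  + by move=> u v hu hv; apply: qproj_uniq => x; rewrite hu hv.
Qed.
End Subm.

Lemma semilin_of_inj (R : comPzSemiRingType) (D A B : lSemiModType R)
  (f : {linear A -> B}) (h : {linear D -> B}) (u : D -> A) :
  injective f -> (forall d, f (u d) = h d) -> GRing.semilinear_for *:%R u.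
Proof.
move=> fi hu; split.
- by move=> r d; apply: fi; rewrite linearZ /= !hu linearZ.
- by move=> d e; apply: fi; rewrite linearD !hu linearD.
Qed.

Definition pre (R : comPzSemiRingType) (A B : lSemiModType R) (f : A -> B) (b : B) : A :=
  epsilon (inhabits 0) (fun m => f m = b).

Lemma preP (R : comPzSemiRingType) (A B : lSemiModType R) (f : A -> B) b :
  (exists m, f m = b) -> f (pre f b) = b.
Proof. by move=> h; apply: (epsilon_spec (inhabits 0) (fun m => f m = b)). Qed.

Theorem mainTheorem12 (R : comPzSemiRingType) (M N : lSemiModType R)
  (i : {linear M -> N}) (L : submod M) :
  normal_mono i -> saturated L ->
  saturated_submodule (image_set i L) /\
  normal_epi (qproj L) /\
  normal_epi (qproj (image_submod i L)) /\
  exists i' : {linear quot L -> quot (image_submod i L)},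
    (forall m : M, i' (qproj L m) = qproj (image_submod i L) (i m)) /\
    normal_mono i' /\
    is_pullback i (qproj L) (qproj (image_submod i L)) i' /\
    is_pushout i (qproj L) (qproj (image_submod i L)) i'.
Proof.
move=> nmi satL.
have ii := nm_inj nmi.
have [C [g [g0 gim]]] := nm_im nmi.
set IL := image_submod i L.
split.
  split; [exact: image0 | exact: imageD | exact: imageZ |].
  move=> x y [a La e] [b Lb ey].
  have gx : g x = 0.
    have := f_equal g e; rewrite linearD ey !g0 addr0; exact.
  have [m im] := gim _ gx.
  exists m => //; apply: (satL m b) => //.
  by have -> : m + b = a by apply: ii; rewrite linearD im -ey.
split; first exact: qproj_nepi.
split; first exact: qproj_nepi.
have jsl : GRing.semilinear_for *:%R (fun m => qproj IL (i m)).
  by split; [move=> r x /=; rewrite !linearZ | move=> x y; rewrite !linearD].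
set j := mklin jsl.
have jK : forall k, L k -> j k = 0.
  by move=> k Lk; apply: qprojK0; exists k.
set i' := qlift jK.
have i'E : forall m, i' (qproj L m) = qproj IL (i m) by move=> m; rewrite qliftE.
have i'inj : injective i'.
  elim/quot_ind => x; elim/quot_ind => y; rewrite !i'E => /qproj_eq.
  move=> [k [k' [[l Ll ->] [l' Ll' ->] e]]].
  apply/qproj_eq; exists l, l'; split => //; apply: ii; by rewrite !linearD.
have gK : forall k, IL k -> g k = 0 by move=> k [l _ ->]; apply: g0.
set g' := qlift gK.
have g'E : forall n, g' (qproj IL n) = g n by move=> n; rewrite qliftE.
have g'i' : forall q, g' (i' q) = 0 by elim/quot_ind => x; rewrite i'E g'E g0.
exists i'; split => //.
split.
  exists C, g'; split => // D h hz; split.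
    have hu : forall d, i' (qproj L (pre i (qrep (h d)))) = h d.
      move=> d; rewrite i'E preP ?qrepK //; apply: gim.
      by rewrite -g'E qrepK hz.
    exists (mklin (semilin_of_inj i'inj hu)) => d; exact: hu.
  by move=> u v hu hv d; apply: i'inj; rewrite hu hv.
split.
  split; first by move=> x; rewrite i'E.
  move=> D a b hab; split.
    have hu : forall d, i (pre i (a d)) = a d.
      move=> d; apply: preP; apply: gim.
      by rewrite -g'E hab g'i'.
    exists (mklin (semilin_of_inj ii hu)) => d; split; rewrite mklinE ?hu //.
    by apply: i'inj; rewrite i'E hu hab.
  by move=> u v hu hv d; apply: ii; rewrite (proj1 (hu d)) (proj1 (hv d)).
split; first by move=> x; rewrite i'E.
move=> D a b hab; split.
  have aK : forall k, IL k -> a k = 0.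
    move=> k [l Ll ->]; rewrite hab -[RHS](linear0 b); congr (b _); exact: qprojK0.
  exists (qlift aK) => x y; split; first by rewrite qliftE.
  by elim/quot_ind: y => y; rewrite i'E qliftE hab.
move=> u v hu hv; apply: qproj_uniq => x.
by rewrite (proj1 (hu x (qproj L 0))) (proj1 (hv x (qproj L 0))).
Qed.
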